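(* Let $v,X,Y\in\mathbb{R}^d$ with $\|X\|<\|v\|$ and $\|Y\|<\|v\|$. Then $$\alpha(v+X,v+Y)\geq -\frac{\|X\|\|Y\|}{\|v\|^2}+\sqrt{1-\frac{\|X\|^2}{\|v\|^2}}\sqrt{1-\frac{\|Y\|^2}{\|v\|^2}}.$$
   Context: For nonzero $a,b\in\mathbb{R}^d$, the cosine similarity is $\alpha(a,b)=\frac{\langle a,b\rangle}{\|a\|\|b\|}$. *)

(* Defs.v *)
From mathcomp Require Import all_boot all_order all_algebra.
Set Implicit Arguments. Unset Strict Implicit. Unset Printing Implicit Defensive.
Import Order.TTheory GRing.Theory Num.Theory.
Local Open Scope ring_scope.

Definition dotp (R : rcfType) (d : nat) (a b : 'rV[R]_d) : R :=
  \sum_(i < d) a ord0 i * b ord0 i.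

Definition enorm (R : rcfType) (d : nat) (a : 'rV[R]_d) : R :=
  Num.sqrt (dotp a a).

Definition cossim (R : rcfType) (d : nat) (a b : 'rV[R]_d) : R :=
  dotp a b / (enorm a * enorm b).

(* Main.v *)
Require Import Defs.
From mathcomp Require Import all_boot all_order all_algebra.
From mathcomp Require Import ring lra.
Import Order.TTheory GRing.Theory Num.Theory.
Local Open Scope ring_scope.

Section S.
Variables (R : rcfType) (d : nat).
Implicit Types (a b c : 'rV[R]_d).

Lemma dotpC a b : dotp a b = dotp b a.
Proof. by apply: eq_bigr => i _; rewrite mulrC. Qed.
Lemma dotpDl a b c : dotp (a + b) c = dotp a c + dotp b c.
Proof. by rewrite /dotp -big_split; apply: eq_bigr => i _; rewrite !mxE mulrDl. Qed.
Lemma dotpDr a b c : dotp a (b + c) = dotp a b + dotp a c.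
Proof. by rewrite dotpC dotpDl !(dotpC a). Qed.
Lemma dotpZl k a b : dotp (k *: a) b = k * dotp a b.
Proof. by rewrite /dotp mulr_sumr; apply: eq_bigr => i _; rewrite !mxE mulrA. Qed.
Lemma dotpZr k a b : dotp a (k *: b) = k * dotp a b.
Proof. by rewrite dotpC dotpZl dotpC. Qed.
Lemma dotp_ge0 a : 0 <= dotp a a.
Proof. by apply: sumr_ge0 => i _; rewrite -expr2 sqr_ge0. Qed.
Lemma dotp_eq0 a : dotp a a = 0 -> a = 0.
Proof.
move=> /psumr_eq0P H; apply/rowP => i; rewrite mxE.
have /eqP := H (fun i _ => ltac:(by rewrite -expr2 sqr_ge0)) i isT.
by rewrite mulf_eq0 orbb => /eqP; rewrite (ord1 ord0).
Qed.
Lemma dotp0r a : dotp a 0 = 0.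
Proof. by rewrite /dotp big1 // => i _; rewrite mxE mulr0. Qed.

Lemma cs a b : dotp a b ^+ 2 <= dotp a a * dotp b b.
Proof.
have [/dotp_eq0 ->|hB] := eqVneq (dotp b b) 0.
  by rewrite !dotp0r expr0n /= mulr0.
have hB0 : 0 < dotp b b by rewrite lt_def hB dotp_ge0.
have := dotp_ge0 (dotp b b *: a + (- dotp a b) *: b).
rewrite !(dotpDl, dotpDr, dotpZl, dotpZr) (dotpC b a).
move: (dotp a a) (dotp b b) (dotp a b) hB0 => A B C hB0 h.
nra.
Qed.
End S.
Arguments dotpC {R d}. Arguments dotpDl {R d}. Arguments dotpDr {R d}. Arguments dotpZl {R d}. Arguments dotpZr {R d}.
Arguments dotp_ge0 {R d}. Arguments cs {R d}.
Lemma core (R : rcfType) (N X2 Y2 a b c : R) (hN: 0<N) (hX2: 0<=X2) (hY2 : 0<=Y2)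
  (hx: X2<N) (hy: Y2<N) (h1: a^+2 <= N*X2) (h2: b^+2 <= N*Y2)
  (h3: (N*c-a*b)^+2 <= (N*X2-a^+2)*(N*Y2-b^+2)) :
  - (Num.sqrt X2 * Num.sqrt Y2) / (Num.sqrt N ^+2)
  + Num.sqrt (1 - Num.sqrt X2 ^+2 / Num.sqrt N ^+2)
    * Num.sqrt (1 - Num.sqrt Y2 ^+2 / Num.sqrt N ^+2)
  <= (N + a + b + c) / (Num.sqrt (N + 2*a + X2) * Num.sqrt (N + 2*b + Y2)).
Proof.
rewrite !sqr_sqrtr ?(ltW hN) //.
have hN0 : 0 <= N := ltW hN.
have E1 : forall Z2, 1 - Z2 / N = (N - Z2) * N^-1.
  by move=> Z2; field; rewrite gt_eqF.
rewrite !E1 !sqrtrM ?subr_ge0 ?(ltW hx) ?(ltW hy) // sqrtrV //.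
set n := Num.sqrt N.
have hn : 0 < n by rewrite sqrtr_gt0.
have hn2 : n ^+ 2 = N by rewrite sqr_sqrtr.
have side : forall (Z2 z : R), 0 <= Z2 -> Z2 < N -> z ^+ 2 <= N * Z2 ->
   [/\ 0 < Num.sqrt (N + 2 * z + Z2),
       Num.sqrt (N - Z2) * Num.sqrt (N + 2 * z + Z2) <= N + z,
       0 <= N * Z2 - z ^+ 2 &
       Num.sqrt (N * Z2 - z ^+ 2) <= Num.sqrt Z2 * Num.sqrt (N + 2 * z + Z2)].
  move=> Z2 z hZ hZN hz.
  have hxz : Num.sqrt Z2 < n by rewrite ltr_sqrt.
  have hx0 : 0 <= Num.sqrt Z2 := sqrtr_ge0 _.
  have hx2 : Num.sqrt Z2 ^+ 2 = Z2 by rewrite sqr_sqrtr.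
  have habs : `|z| <= n * Num.sqrt Z2.
    by rewrite -sqrtr_sqr -sqrtrM // ler_wsqrtr.
  move: habs; rewrite ler_norml => /andP [hl hr].
  have hA : 0 <= N + z by nra.
  have hp : 0 < N + 2 * z + Z2 by nra.
  split.
  - by rewrite sqrtr_gt0.
  - rewrite -sqrtrM ?subr_ge0 ?(ltW hZN) // -(ger0_norm hA) -sqrtr_sqr.
    apply: ler_wsqrtr.
    have -> : (N + z) ^+ 2 = (N - Z2) * (N + 2 * z + Z2) + (z + Z2) ^+ 2 by ring.
    by rewrite lerDl sqr_ge0.
  - by rewrite subr_ge0.
  - rewrite -sqrtrM //; apply: ler_wsqrtr.
    have -> : Z2 * (N + 2 * z + Z2) = (N * Z2 - z ^+ 2) + (z + Z2) ^+ 2 by ring.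
    by rewrite lerDl sqr_ge0.
have [hp hAp hP0 hPp] := side X2 a hX2 hx h1.
have [hq hBq hQ0 hQq] := side Y2 b hY2 hy h2.
set p := Num.sqrt (N + 2 * a + X2) in hp hAp hPp *.
set q := Num.sqrt (N + 2 * b + Y2) in hq hBq hQq *.
set P := Num.sqrt (N * X2 - a ^+ 2) in hPp.
set Q := Num.sqrt (N * Y2 - b ^+ 2) in hQq.
have hPQ : `|N * c - a * b| <= P * Q.
  by rewrite -sqrtr_sqr /P /Q -sqrtrM // ler_wsqrtr.
move: hPQ; rewrite ler_norml => /andP [hl _].
have hAB : Num.sqrt (N - X2) * p * (Num.sqrt (N - Y2) * q) <= (N + a) * (N + b).
  apply: ler_pM => //; by rewrite mulr_ge0 ?sqrtr_ge0 ?ltW.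
have hPQ2 : P * Q <= Num.sqrt X2 * p * (Num.sqrt Y2 * q).
  by apply: ler_pM => //; rewrite sqrtr_ge0.
have hpq : 0 < p * q by rewrite mulr_gt0.
set L := (X in X <= _).
have -> : L = (Num.sqrt (N - X2) * Num.sqrt (N - Y2) - Num.sqrt X2 * Num.sqrt Y2) / N.
  rewrite /L -hn2 invfM; field; rewrite gt_eqF //.
rewrite -subr_ge0.
have -> : (N + a + b + c) / (p * q) -
   (Num.sqrt (N - X2) * Num.sqrt (N - Y2) - Num.sqrt X2 * Num.sqrt Y2) / N
   = (N * (N + a + b + c) - (Num.sqrt (N - X2) * Num.sqrt (N - Y2) - Num.sqrt X2 * Num.sqrt Y2) * (p * q)) / (N * (p * q)).
  by field; rewrite !gt_eqF // ?andbT.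
apply: divr_ge0; last by rewrite mulr_ge0 ?ltW.
rewrite subr_ge0.
have -> : N * (N + a + b + c) = (N + a) * (N + b) + (N * c - a * b) by ring.
lra.
Qed.

Theorem lemma1 (R : rcfType) (d : nat) (v X Y : 'rV[R]_d)
  (hX : enorm X < enorm v) (hY : enorm Y < enorm v) :
  cossim (v + X) (v + Y) >=
    - (enorm X * enorm Y) / (enorm v ^+ 2)
    + Num.sqrt (1 - enorm X ^+ 2 / enorm v ^+ 2)
      * Num.sqrt (1 - enorm Y ^+ 2 / enorm v ^+ 2).
Proof.
have hv0 : 0 < dotp v v.
  by move: hX; rewrite /enorm => /(le_lt_trans (sqrtr_ge0 _)); rewrite sqrtr_gt0.
have hx : dotp X X < dotp v v by move: hX; rewrite /enorm ltr_sqrt.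
have hy : dotp Y Y < dotp v v by move: hY; rewrite /enorm ltr_sqrt.
have h3 := @cs R d (dotp v v *: X + (- dotp v X) *: v) (dotp v v *: Y + (- dotp v Y) *: v).
rewrite !(dotpDl, dotpDr, dotpZl, dotpZr) !(dotpC X v) !(dotpC Y v) ?(dotpC Y X) in h3.
have h3' : (dotp v v * dotp X Y - dotp v X * dotp v Y) ^+ 2 <=
   (dotp v v * dotp X X - dotp v X ^+ 2) * (dotp v v * dotp Y Y - dotp v Y ^+ 2).
  move: h3 hv0; move: (dotp v v) (dotp X X) (dotp Y Y) (dotp v X) (dotp v Y) (dotp X Y).
  move=> N X2 Y2 a b c h3 hN.
  have E : forall u w : R, u ^+ 2 <= w -> (N * N) * u ^+ 2 <= (N * N) * w.
    by move=> u w h; rewrite ler_pM2l ?mulr_gt0.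
  rewrite -(ler_pM2l (mulr_gt0 hN hN)); nra.
have := @core R _ _ _ _ _ _ hv0 (@dotp_ge0 R d X) (@dotp_ge0 R d Y) hx hy (@cs R d v X) (@cs R d v Y) h3'.
rewrite /cossim /enorm !(dotpDl, dotpDr) !(dotpC X v) !(dotpC Y v).
have -> : dotp v v + dotp v X + (dotp v X + dotp X X) = dotp v v + 2 * dotp v X + dotp X X by ring.
have -> : dotp v v + dotp v Y + (dotp v Y + dotp Y Y) = dotp v v + 2 * dotp v Y + dotp Y Y by ring.
have -> : dotp v v + dotp v Y + (dotp v X + dotp X Y) = dotp v v + dotp v X + dotp v Y + dotp X Y by ring.
by [].
Qed.
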